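(* For every finite multiset $\Gamma$ of ILL formulae and every ILL formula $\varphi$: $\Gamma\vdash\varphi$ (derivability in $\mathrm{N_{ILL}}$) holds if and only if $\Gamma\vdash^*\varphi$.
   Context: Fix a set $\mathbb{A}$ of propositional atoms. ILL formulae: $\phi ::= p\in\mathbb{A} \mid \top \mid 0 \mid 1 \mid \phi\multimap\phi \mid \phi\otimes\phi \mid \phi\,\&\,\phi \mid \phi\oplus\phi \mid\ !\phi$. All multisets are finite; ''$\Gamma,\Delta$'' is multiset union. Natural deduction $\mathrm{N_{ILL}}$: $\Gamma\vdash\varphi$ is defined inductively by: (Ax) $\varphi\vdash\varphi$; ($\multimap$I) from $\Gamma,\phi\vdash\psi$ infer $\Gamma\vdash\phi\multimap\psi$; ($\multimap$E) from $\Gamma\vdash\phi\multimap\psi$ and $\Delta\vdash\phi$ infer $\Gamma,\Delta\vdash\psi$; ($\otimes$I) from $\Gamma\vdash\phi$, $\Delta\vdash\psi$ infer $\Gamma,\Delta\vdash\phi\otimes\psi$; ($\otimes$E) from $\Gamma\vdash\phi\otimes\psi$ and $\Delta,\phi,\psi\vdash\chi$ infer $\Gamma,\Delta\vdash\chi$; ($1$I) $\vdash 1$; ($1$E) from $\Gamma\vdash 1$, $\Delta\vdash\phi$ infer $\Gamma,\Delta\vdash\phi$; ($\&$I) from $\Gamma\vdash\phi$, $\Gamma\vdash\psi$ infer $\Gamma\vdash\phi\&\psi$; ($\&$E) from $\Gamma\vdash\phi\&\psi$ infer $\Gamma\vdash\phi$ and infer $\Gamma\vdash\psi$; ($\oplus$I)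 from $\Gamma\vdash\phi$ (or $\Gamma\vdash\psi$) infer $\Gamma\vdash\phi\oplus\psi$; ($\oplus$E) from $\Gamma\vdash\phi\oplus\psi$, $\Delta,\phi\vdash\chi$, $\Delta,\psi\vdash\chi$ infer $\Gamma,\Delta\vdash\chi$; ($\top$I) for $n\ge0$, from $\Gamma_i\vdash\phi_i$ ($i=1..n$) infer $\Gamma_1,\dots,\Gamma_n\vdash\top$; ($0$E) for $n\ge 0$, from $\Gamma_i\vdash\phi_i$ ($i=1..n$) and $\Delta\vdash 0$ infer $\Gamma_1,\dots,\Gamma_n,\Delta\vdash\chi$; (Prom$_n$) for $n\ge0$, from $\Gamma_i\vdash\,!\psi_i$ ($i=1..n$) and $!\psi_1,\dots,!\psi_n\vdash\phi$ infer $\Gamma_1,\dots,\Gamma_n\vdash\,!\phi$; (Der) from $\Gamma\vdash\,!\phi$, $\Delta,\phi\vdash\psi$ infer $\Gamma,\Delta\vdash\psi$; (Wk) from $\Gamma\vdash\,!\phi$, $\Delta\vdash\psi$ infer $\Gamma,\Delta\vdash\psi$; (Ctr) from $\Gamma\vdash\,!\phi$, $\Delta,!\phi,!\phi\vdash\psi$ infer $\Gamma,\Delta\vdash\psi$. Inference schemas: a sequent is $\Psi\Rightarrow\psi$ ($\Psi$ a multiset of formulae); a box is a multiset of sequents; a schema is $\langle\mathbf{A},\mathbf{S},\varphi\rangle$ with $\mathbf{A}$ a multiset of boxes, $\mathbf{S}$ a multiset of sequents, $\varphi$ a formula. The set $\mathfrak{N}$ consists of all instances (for all formulae $\varphi,\psi,\chi,\varphi_i$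 and all $n\ge0$) of: $\langle[\{\varphi\Rightarrow\psi\}],\varnothing,\varphi\multimap\psi\rangle$; $\langle[\{\Rightarrow\varphi\multimap\psi\},\{\Rightarrow\varphi\}],\varnothing,\psi\rangle$; $\langle[\{\Rightarrow\varphi\},\{\Rightarrow\psi\}],\varnothing,\varphi\otimes\psi\rangle$; $\langle[\{\Rightarrow\varphi\otimes\psi\},\{\varphi,\psi\Rightarrow\chi\}],\varnothing,\chi\rangle$; $\langle\varnothing,\varnothing,1\rangle$; $\langle[\{\Rightarrow1\},\{\Rightarrow\chi\}],\varnothing,\chi\rangle$; $\langle[\{\Rightarrow\varphi,\ \Rightarrow\psi\}],\varnothing,\varphi\&\psi\rangle$; $\langle[\{\Rightarrow\varphi\&\psi\}],\varnothing,\varphi\rangle$; $\langle[\{\Rightarrow\varphi\&\psi\}],\varnothing,\psi\rangle$; $\langle[\{\Rightarrow\varphi\}],\varnothing,\varphi\oplus\psi\rangle$; $\langle[\{\Rightarrow\psi\}],\varnothing,\varphi\oplus\psi\rangle$; $\langle[\{\Rightarrow\varphi\oplus\psi\},\{\varphi\Rightarrow\chi,\ \psi\Rightarrow\chi\}],\varnothing,\chi\rangle$; $\langle[\{\Rightarrow\varphi_1\},\dots,\{\Rightarrow\varphi_n\}],\varnothing,\top\rangle$; $\langle[\{\Rightarrow\varphi_1\},\dots,\{\Rightarrow\varphi_n\},\{\Rightarrow0\}],\varnothing,\chi\rangle$; $\langle\varnothing,[\Rightarrow\varphi],!\varphi\rangle$; $\langle[\{\Rightarrow!\varphi\},\{\varphi\Rightarrow\psi\}],\varnothing,\psi\rangle$;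 $\langle[\{\Rightarrow!\varphi\},\{\Rightarrow\psi\}],\varnothing,\psi\rangle$; $\langle[\{\Rightarrow!\varphi\},\{!\varphi,!\varphi\Rightarrow\psi\}],\varnothing,\psi\rangle$. $\vdash^*$ is defined inductively: (Ref) $\varphi\vdash^*\varphi$; (App) if $\langle\mathbf{A},\mathbf{S},\varphi\rangle\in\mathfrak{N}$ with $\mathbf{A}=\{\mathbf{T}_1,\dots,\mathbf{T}_m\}$, and there are multisets of formulae $\Gamma_1,\dots,\Gamma_n$ ($n\ge m$) and formulae $\delta_{m+1},\dots,\delta_n$ such that $\Gamma_i,\Psi\vdash^*\psi$ for every $i\le m$ and every $\Psi\Rightarrow\psi\in\mathbf{T}_i$, $\Gamma_j\vdash^*!\delta_j$ for every $m<j\le n$, and $!\delta_{m+1},\dots,!\delta_n,\Theta\vdash^*\theta$ for every $\Theta\Rightarrow\theta\in\mathbf{S}$, then $\Gamma_1,\dots,\Gamma_n\vdash^*\varphi$. *)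

(* Defs.v *)
(* Multisets of formulae are represented by lists taken up to
   Permutation: every rule's conclusion context is any permutation of the
   multiset union (list concatenation) of the premise contexts. *)
From Stdlib Require Import List Permutation.
Import ListNotations.
Set Implicit Arguments.

Section ILL.
Variable atom : Type.

Inductive form : Type :=
| Atom : atom -> form
| Top : form
| Zero : form
| One : form
| Lolli : form -> form -> form
| Tensor : form -> form -> form
| With : form -> form -> form
| Plus : form -> form -> form
| Bang : form -> form.

Inductive nd : list form -> form -> Prop :=
| nd_ax : forall phi, nd [phi] phi
| nd_lolliI : forall G phi psi, nd (phi :: G) psi -> nd G (Lolli phi psi)
| nd_lolliE : forall G D S phi psi,
    nd G (Lolli phi psi) -> nd D phi -> Permutation S (G ++ D) -> nd S psi
| nd_tensorI : forall G D S phi psi,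
    nd G phi -> nd D psi -> Permutation S (G ++ D) -> nd S (Tensor phi psi)
| nd_tensorE : forall G D S phi psi chi,
    nd G (Tensor phi psi) -> nd (phi :: psi :: D) chi ->
    Permutation S (G ++ D) -> nd S chi
| nd_oneI : nd [] One
| nd_oneE : forall G D S phi,
    nd G One -> nd D phi -> Permutation S (G ++ D) -> nd S phi
| nd_withI : forall G phi psi, nd G phi -> nd G psi -> nd G (With phi psi)
| nd_withE1 : forall G phi psi, nd G (With phi psi) -> nd G phi
| nd_withE2 : forall G phi psi, nd G (With phi psi) -> nd G psi
| nd_plusI1 : forall G phi psi, nd G phi -> nd G (Plus phi psi)
| nd_plusI2 : forall G phi psi, nd G psi -> nd G (Plus phi psi)
| nd_plusE : forall G D S phi psi chi,
    nd G (Plus phi psi) -> nd (phi :: D) chi -> nd (psi :: D) chi ->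
    Permutation S (G ++ D) -> nd S chi
| nd_topI : forall (prems : list (list form * form)) S,
    (forall p, In p prems -> nd (fst p) (snd p)) ->
    Permutation S (concat (map fst prems)) -> nd S Top
| nd_zeroE : forall (prems : list (list form * form)) D S chi,
    (forall p, In p prems -> nd (fst p) (snd p)) ->
    nd D Zero ->
    Permutation S (concat (map fst prems) ++ D) -> nd S chi
| nd_prom : forall (prems : list (list form * form)) S phi,
    (forall p, In p prems -> nd (fst p) (Bang (snd p))) ->
    nd (map (fun p => Bang (snd p)) prems) phi ->
    Permutation S (concat (map fst prems)) -> nd S (Bang phi)
| nd_der : forall G D S phi psi,
    nd G (Bang phi) -> nd (phi :: D) psi -> Permutation S (G ++ D) -> nd S psi
| nd_wk : forall G D S phi psi,
    nd G (Bang phi) -> nd D psi -> Permutation S (G ++ D) -> nd S psi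
| nd_ctr : forall G D S phi psi,
    nd G (Bang phi) -> nd (Bang phi :: Bang phi :: D) psi ->
    Permutation S (G ++ D) -> nd S psi.

Definition sequent : Type := (list form * form)%type.
Definition box : Type := list sequent.
Definition schema : Type := (list box * list sequent * form)%type.

Definition nullary (phi : form) : sequent := ([], phi).

Inductive inN : schema -> Prop :=
| N_lolliI : forall phi psi, inN ([[([phi], psi)]], [], Lolli phi psi)
| N_lolliE : forall phi psi,
    inN ([[nullary (Lolli phi psi)]; [nullary phi]], [], psi)
| N_tensorI : forall phi psi,
    inN ([[nullary phi]; [nullary psi]], [], Tensor phi psi)
| N_tensorE : forall phi psi chi,
    inN ([[nullary (Tensor phi psi)]; [([phi; psi], chi)]], [], chi)
| N_oneI : inN ([], [], One)
| N_oneE : forall chi, inN ([[nullary One]; [nullary chi]], [], chi)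
| N_withI : forall phi psi,
    inN ([[nullary phi; nullary psi]], [], With phi psi)
| N_withE1 : forall phi psi, inN ([[nullary (With phi psi)]], [], phi)
| N_withE2 : forall phi psi, inN ([[nullary (With phi psi)]], [], psi)
| N_plusI1 : forall phi psi, inN ([[nullary phi]], [], Plus phi psi)
| N_plusI2 : forall phi psi, inN ([[nullary psi]], [], Plus phi psi)
| N_plusE : forall phi psi chi,
    inN ([[nullary (Plus phi psi)]; [([phi], chi); ([psi], chi)]], [], chi)
| N_topI : forall (phis : list form),
    inN (map (fun phi => [nullary phi]) phis, [], Top)
| N_zeroE : forall (phis : list form) chi,
    inN (map (fun phi => [nullary phi]) phis ++ [[nullary Zero]], [], chi)
| N_prom : forall phi, inN ([], [nullary phi], Bang phi)
| N_der : forall phi psi,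
    inN ([[nullary (Bang phi)]; [([phi], psi)]], [], psi)
| N_wk : forall phi psi,
    inN ([[nullary (Bang phi)]; [nullary psi]], [], psi)
| N_ctr : forall phi psi,
    inN ([[nullary (Bang phi)]; [([Bang phi; Bang phi], psi)]], [], psi).

(** In (App), [bs] pairs each box T_i (i <= m) of the
    multiset A (taken up to permutation) with its context Gamma_i, and
    [ex] lists the pairs (Gamma_j, delta_j) for m < j <= n. *)
Inductive star : list form -> form -> Prop :=
| star_ref : forall phi, star [phi] phi
| star_app : forall (A : list box) (Ss : list sequent) (phi : form)
      (bs : list (list form * box)) (ex : list (list form * form))
      (S : list form),
    inN (A, Ss, phi) ->
    Permutation (map snd bs) A ->
    (forall b, In b bs -> forall q, In q (snd b) ->
       star (fst b ++ fst q) (snd q)) ->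
    (forall e, In e ex -> star (fst e) (Bang (snd e))) ->
    (forall q, In q Ss ->
       star (map (fun e => Bang (snd e)) ex ++ fst q) (snd q)) ->
    Permutation S (concat (map fst bs) ++ concat (map fst ex)) ->
    star S phi.

End ILL.

(* Main.v *)
Require Import Defs.
From Stdlib Require Import List Permutation.
Import ListNotations.

Section S.
Variable atom : Type.
Notation F := (form atom).

Lemma perm_concat {T} (l l' : list (list T)) : Permutation l l' -> Permutation (concat l) (concat l').
Proof.
  induction 1; simpl; auto.
  - apply Permutation_app_head; auto.
  - rewrite !app_assoc. apply Permutation_app_tail, Permutation_app_comm.
  - eapply Permutation_trans; eauto.
Qed.

Lemma nd_perm : forall G (phi : F), nd G phi -> forall G', Permutation G G' -> nd G' phi.
Proof.
  induction 1; intros G' HP.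
  - apply Permutation_length_1_inv in HP; subst; constructor.
  - constructor. apply IHnd. constructor; auto.
  - eapply nd_lolliE; eauto. eapply Permutation_trans; [symmetry; eauto|eauto].
  - eapply nd_tensorI; eauto. eapply Permutation_trans; [symmetry; eauto|eauto].
  - eapply nd_tensorE; eauto. eapply Permutation_trans; [symmetry; eauto|eauto].
  - apply Permutation_nil in HP; subst; constructor.
  - eapply nd_oneE; eauto. eapply Permutation_trans; [symmetry; eauto|eauto].
  - constructor; auto.
  - eapply nd_withE1; eauto.
  - eapply nd_withE2; eauto.
  - eapply nd_plusI1; eauto.
  - eapply nd_plusI2; eauto.
  - eapply nd_plusE; eauto. eapply Permutation_trans; [symmetry; eauto|eauto].
  - eapply nd_topI; eauto. eapply Permutation_trans; [symmetry; eauto|eauto].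
  - eapply nd_zeroE; eauto. eapply Permutation_trans; [symmetry; eauto|eauto].
  - eapply nd_prom; eauto. eapply Permutation_trans; [symmetry; eauto|eauto].
  - eapply nd_der; eauto. eapply Permutation_trans; [symmetry; eauto|eauto].
  - eapply nd_wk; eauto. eapply Permutation_trans; [symmetry; eauto|eauto].
  - eapply nd_ctr; eauto. eapply Permutation_trans; [symmetry; eauto|eauto].
Qed.

Lemma star_perm : forall G (phi : F), star G phi -> forall G', Permutation G G' -> star G' phi.
Proof.
  intros G phi H G' HP. destruct H.
  - apply Permutation_length_1_inv in HP; subst; constructor.
  - eapply star_app; eauto. eapply Permutation_trans; [symmetry; eauto|eauto].
Qed.

Ltac pm := simpl; rewrite ?app_nil_r;
  first [ apply Permutation_refl | apply Permutation_app_comm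
        | symmetry; apply Permutation_app_comm
        | eapply Permutation_trans; [apply Permutation_app_comm | simpl; apply Permutation_refl] ].

Ltac boxes := let b := fresh in let Hb := fresh in let q := fresh in let Hq := fresh in
  intros b Hb q Hq; simpl in Hb;
  repeat (destruct Hb as [<-|Hb]); try contradiction;
  simpl in Hq; repeat (destruct Hq as [<-|Hq]); try contradiction; simpl.

Ltac sp := match goal with H : star _ _ |- _ => eapply star_perm; [exact H | pm] end.

Lemma nd_star : forall G (phi : F), nd G phi -> star G phi.
Proof.
  induction 1.
  - constructor.
  - eapply (@star_app atom [[([phi], psi)]] [] _ [(G,[([phi],psi)])] []);
      [simpl; constructor|apply Permutation_refl| boxes | simpl; tauto | simpl; tauto | pm].
    sp.
  - eapply (@star_app atom (map snd ([(G,[nullary (Lolli phi psi)]);(D,[nullary phi])])) _ _ ([(G,[nullary (Lolli phi psi)]);(D,[nullary phi])]) []);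
      [simpl; constructor|apply Permutation_refl| boxes | simpl; tauto | simpl; tauto | ];
      simpl; rewrite ?app_nil_r; auto.
  - eapply (@star_app atom (map snd ([(G,[nullary phi]);(D,[nullary psi])])) _ _ ([(G,[nullary phi]);(D,[nullary psi])]) []);
      [simpl; constructor|apply Permutation_refl| boxes | simpl; tauto | simpl; tauto | ];
      simpl; rewrite ?app_nil_r; auto.
  - eapply (@star_app atom (map snd ([(G,[nullary (Tensor phi psi)]);(D,[([phi;psi],chi)])])) _ _ ([(G,[nullary (Tensor phi psi)]);(D,[([phi;psi],chi)])]) []);
      [simpl; constructor|apply Permutation_refl| boxes | simpl; tauto | simpl; tauto | ];
      simpl; rewrite ?app_nil_r; auto.
    sp.
  - eapply (@star_app atom [] [] _ [] []);
      [simpl; constructor|apply Permutation_refl| boxes | simpl; tauto | simpl; tauto | pm].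
  - eapply (@star_app atom (map snd ([(G,[nullary (One atom)]);(D,[nullary phi])])) _ _ ([(G,[nullary (One atom)]);(D,[nullary phi])]) []);
      [simpl; constructor|apply Permutation_refl| boxes | simpl; tauto | simpl; tauto | ];
      simpl; rewrite ?app_nil_r; auto.
  - eapply (@star_app atom (map snd ([(G,[nullary phi; nullary psi])])) _ _ ([(G,[nullary phi; nullary psi])]) []);
      [simpl; constructor|apply Permutation_refl| boxes | simpl; tauto | simpl; tauto | pm];
      simpl; rewrite ?app_nil_r; auto.
  - eapply (@star_app atom (map snd ([(G,[nullary (With phi psi)])])) _ _ ([(G,[nullary (With phi psi)])]) []);
      [simpl; apply N_withE1|apply Permutation_refl| boxes | simpl; tauto | simpl; tauto | pm];
      simpl; rewrite ?app_nil_r; auto.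
  - eapply (@star_app atom (map snd ([(G,[nullary (With phi psi)])])) _ _ ([(G,[nullary (With phi psi)])]) []);
      [simpl; apply N_withE2|apply Permutation_refl| boxes | simpl; tauto | simpl; tauto | pm];
      simpl; rewrite ?app_nil_r; auto.
  - eapply (@star_app atom (map snd ([(G,[nullary phi])])) _ _ ([(G,[nullary phi])]) []);
      [simpl; apply N_plusI1|apply Permutation_refl| boxes | simpl; tauto | simpl; tauto | pm];
      simpl; rewrite ?app_nil_r; auto.
  - eapply (@star_app atom (map snd ([(G,[nullary psi])])) _ _ ([(G,[nullary psi])]) []);
      [simpl; apply N_plusI2|apply Permutation_refl| boxes | simpl; tauto | simpl; tauto | pm];
      simpl; rewrite ?app_nil_r; auto.
  - eapply (@star_app atom (map snd ([(G,[nullary (Plus phi psi)]);(D,[([phi],chi);([psi],chi)])])) _ _ ([(G,[nullary (Plus phi psi)]);(D,[([phi],chi);([psi],chi)])]) []);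
      [simpl; constructor|apply Permutation_refl| boxes | simpl; tauto | simpl; tauto | ];
      simpl; rewrite ?app_nil_r; auto; sp.
  - eapply (@star_app atom (map (fun phi => [nullary phi]) (map snd prems)) _ _ (map (fun p => (fst p, [nullary (snd p)])) prems) []);
      [apply (N_topI (map snd prems))| | | simpl; tauto | simpl; tauto | ].
    + rewrite !map_map. apply Permutation_refl.
    + intros b Hb q Hq. apply in_map_iff in Hb as [p [<- Hp]].
      simpl in Hq; destruct Hq as [<-|[]]; simpl; rewrite app_nil_r; auto.
    + rewrite map_map, app_nil_r. simpl. auto.
  - eapply (@star_app atom (map (fun phi => [nullary phi]) (map snd prems) ++ [[nullary (Zero atom)]]) _ _ (map (fun p => (fst p, [nullary (snd p)])) prems ++ [(D,[nullary (Zero atom)])]) []);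
      [apply (N_zeroE (map snd prems))| | | simpl; tauto | simpl; tauto | ].
    + rewrite map_app, !map_map. apply Permutation_refl.
    + intros b Hb q Hq. apply in_app_or in Hb as [Hb|Hb].
      * apply in_map_iff in Hb as [p [<- Hp]].
        simpl in Hq; destruct Hq as [<-|[]]; simpl; rewrite app_nil_r; auto.
      * simpl in Hb; destruct Hb as [<-|[]].
        simpl in Hq; destruct Hq as [<-|[]]; simpl; rewrite app_nil_r; auto.
    + rewrite map_app, map_map, concat_app, app_nil_r. simpl. rewrite app_nil_r. auto.
  - eapply (@star_app atom [] [nullary phi] _ [] prems);
      [simpl; constructor|apply Permutation_refl| simpl; tauto | auto | | simpl; auto ].
    intros q [<-|[]]; simpl; rewrite app_nil_r; auto.
  - eapply (@star_app atom (map snd ([(G,[nullary (Bang phi)]);(D,[([phi],psi)])])) _ _ ([(G,[nullary (Bang phi)]);(D,[([phi],psi)])]) []);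
      [simpl; constructor|apply Permutation_refl| boxes | simpl; tauto | simpl; tauto | ];
      simpl; rewrite ?app_nil_r; auto; sp.
  - eapply (@star_app atom (map snd ([(G,[nullary (Bang phi)]);(D,[nullary psi])])) _ _ ([(G,[nullary (Bang phi)]);(D,[nullary psi])]) []);
      [simpl; apply N_wk|apply Permutation_refl| boxes | simpl; tauto | simpl; tauto | ];
      simpl; rewrite ?app_nil_r; auto.
  - eapply (@star_app atom (map snd ([(G,[nullary (Bang phi)]);(D,[([Bang phi; Bang phi],psi)])])) _ _ ([(G,[nullary (Bang phi)]);(D,[([Bang phi; Bang phi],psi)])]) []);
      [simpl; constructor|apply Permutation_refl| boxes | simpl; tauto | simpl; tauto | ];
      simpl; rewrite ?app_nil_r; auto; sp.
Qed.

Lemma nd_weak_ex : forall (ex : list (list F * F)) G phi, nd G phi ->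
  (forall e, In e ex -> nd (fst e) (Bang (snd e))) ->
  nd (G ++ concat (map fst ex)) phi.
Proof.
  induction ex as [|e ex IH]; intros G phi H Hex; simpl.
  - rewrite app_nil_r; auto.
  - eapply (nd_wk (G := fst e) (D := G ++ concat (map fst ex))).
    + apply Hex; simpl; auto.
    + apply IH; auto. intros; apply Hex; simpl; auto.
    + rewrite !app_assoc. apply Permutation_app_tail, Permutation_app_comm.
Qed.

Ltac getp Hb := 
    try pose proof (Hb _ (in_eq _ _) _ (in_eq _ _));
    try pose proof (Hb _ (in_cons _ _ _ (in_eq _ _)) _ (in_eq _ _));
    try pose proof (Hb _ (in_eq _ _) _ (in_cons _ _ _ (in_eq _ _)));
    try pose proof (Hb _ (in_cons _ _ _ (in_eq _ _)) _ (in_cons _ _ _ (in_eq _ _))).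
Ltac dl3 := match goal with H : _ = map snd ?l, Hb : forall b, In b ?l -> _ |- _ =>
  let G1 := fresh "G" in let G2 := fresh "G" in let b1 := fresh "b" in let b2 := fresh "b" in
  destruct l as [|[G1 b1] [|[G2 b2] [|]]]; simpl in H; try discriminate; try (injection H; intros; subst); getp Hb end.
Ltac ndp := match goal with H : nd _ _ |- _ => eapply nd_perm; [exact H | pm] end.

Lemma boxes_nullary (l3 : list (list F * box atom)) phis :
  map (fun phi => [nullary phi]) phis = map snd l3 ->
  (forall b, In b l3 -> forall q, In q (snd b) -> nd (fst b ++ fst q) (snd q)) ->
  forall p, In p (map (fun b => (fst b, snd (hd (nullary (Top atom)) (snd b)))) l3) ->
  nd (fst p) (snd p).
Proof.
  intros H0 Hb p Hp. apply in_map_iff in Hp as [b [<- Hbl]].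
  assert (Hs : In (snd b) (map snd l3)) by (apply in_map; auto).
  rewrite <- H0 in Hs. apply in_map_iff in Hs as [phi [Heq _]].
  destruct b as [G bx]; simpl in *; subst.
  specialize (Hb _ Hbl (nullary phi) (in_eq _ _)). simpl in Hb.
  rewrite app_nil_r in Hb. exact Hb.
Qed.

Lemma core : forall A Ss (phi : F) l3 ex, inN (A, Ss, phi) -> A = map snd l3 ->
  (forall b, In b l3 -> forall q, In q (snd b) -> nd (fst b ++ fst q) (snd q)) ->
  (forall e, In e ex -> nd (fst e) (Bang (snd e))) ->
  (forall q, In q Ss -> nd (map (fun e => Bang (snd e)) ex ++ fst q) (snd q)) ->
  nd (concat (map fst l3) ++ concat (map fst ex)) phi.
Proof.
  intros A Ss phi l3 ex HN HA Hb Hex HSs.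
  inversion HN; subst.
  all: try (match goal with HSs : forall q, In q [] -> _ |- _ => apply nd_weak_ex; [|exact Hex] end).
  all: try (dl3; simpl in *; rewrite ?app_nil_r in *; fail).
  - dl3; simpl in *; rewrite ?app_nil_r in *. constructor. ndp.
  - dl3; simpl in *; rewrite ?app_nil_r in *. eapply nd_lolliE; [ndp|ndp|pm].
  - dl3; simpl in *; rewrite ?app_nil_r in *. eapply nd_tensorI; [ndp|ndp|pm].
  - dl3; simpl in *; rewrite ?app_nil_r in *. eapply nd_tensorE; [ndp|ndp|pm].
  - dl3; simpl in *; rewrite ?app_nil_r in *. constructor.
  - dl3; simpl in *; rewrite ?app_nil_r in *. eapply nd_oneE; [ndp|ndp|pm].
  - dl3; simpl in *; rewrite ?app_nil_r in *. constructor; ndp.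
  - dl3; simpl in *; rewrite ?app_nil_r in *. eapply nd_withE1; ndp.
  - dl3; simpl in *; rewrite ?app_nil_r in *. eapply nd_withE2; ndp.
  - dl3; simpl in *; rewrite ?app_nil_r in *. eapply nd_plusI1; ndp.
  - dl3; simpl in *; rewrite ?app_nil_r in *. eapply nd_plusI2; ndp.
  - dl3; simpl in *; rewrite ?app_nil_r in *. eapply nd_plusE; [ndp|ndp|ndp|pm].
  - eapply nd_topI. { eapply boxes_nullary; eauto. }
    rewrite map_map. apply Permutation_refl.
  - symmetry in H0. apply map_eq_app in H0 as [l1 [l2 [-> [H1 H2]]]].
    destruct l2 as [|[D b1] [|]]; simpl in H2; try discriminate.
    injection H2; intros; subst.
    eapply (@nd_zeroE atom (map (fun b => (fst b, snd (hd (nullary (Top atom)) (snd b)))) l1) D).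
    + eapply boxes_nullary; eauto. intros b Hb1; apply Hb, in_or_app; auto.
    + specialize (Hb (D, [nullary (Zero atom)]) ltac:(apply in_or_app; simpl; auto) _ (in_eq _ _)).
      simpl in Hb; rewrite app_nil_r in Hb; exact Hb.
    + rewrite map_map, map_app, concat_app. simpl. rewrite app_nil_r. apply Permutation_refl.
  - destruct l3; simpl in H0; try discriminate. simpl.
    eapply (@nd_prom atom ex); [exact Hex| |apply Permutation_refl].

    specialize (HSs _ (in_eq _ _)); simpl in HSs; rewrite app_nil_r in HSs; exact HSs.
  - dl3; simpl in *; rewrite ?app_nil_r in *. eapply nd_der; [ndp|ndp|pm].
  - dl3; simpl in *; rewrite ?app_nil_r in *. eapply nd_wk; [ndp|ndp|pm].
  - dl3; simpl in *; rewrite ?app_nil_r in *. eapply nd_ctr; [ndp|ndp|pm].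
Qed.

Lemma star_nd : forall G (phi : F), star G phi -> nd G phi.
Proof.
  induction 1 as [phi | A Ss phi bs ex S HN HP Hbs IHbs Hex IHex HSs IHSs HS].
  - constructor.
  - symmetry in HP. apply Permutation_map_inv in HP as [l3 [HA Hp]].
    eapply nd_perm; [| symmetry; exact HS].
    eapply nd_perm; [eapply (core _ _ _ l3 ex HN HA) |].
    + intros b Hb q Hq. apply IHbs; auto. eapply Permutation_in; [symmetry; exact Hp | exact Hb].
    + exact IHex.
    + exact IHSs.
    + apply Permutation_app_tail, perm_concat, Permutation_map. symmetry; exact Hp.
Qed.
End S.

Theorem theorem3 (atom : Type) (Gamma : list (form atom)) (phi : form atom) :
  nd Gamma phi <-> star Gamma phi.
Proof. split; [apply nd_star | apply star_nd]. Qed.
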